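(* Let $c\ge2$, let $\Gamma=(V,E)$ be a $c$-uniform unoriented hypergraph with no isolated vertices, let $k\ge2$ and let $V_1,\dots,V_k$ be a partition of $V$. Assume there is an integer $m\ge1$ such that $|e\cap V_i|\in\{0,m\}$ for every $e\in E$ and every $i=1,\dots,k$. Then the functions $g_{ij}$ (for all distinct $i,j\in\{1,\dots,k\}$) are all eigenfunctions of the normalized Laplacian $L$ if and only if for all $i=1,\dots,k$ and all $v\in V$, \[ \bigl|\{e\in E: v\in e,\ e\cap V_i\neq\varnothing\}\bigr|=\begin{cases}\dfrac{(c/m-1)\deg v}{k-1}, & v\notin V_i,\\[2mm] \deg v, & v\in V_i.\end{cases} \] In this case the corresponding eigenvalue is $\dfrac{mk-c}{k-1}$.
   Context: A hypergraph has finite vertex set $V$ and edge set $E\subseteq\mathcal P(V)$; it is $c$-uniform if $|e|=c$ for all $e$, and unoriented means all incidences have orientation $+1$. $\deg v=|\{e\in E: v\in e\}|\ge1$, $D=\mathrm{diag}(\deg v)$, adjacency $A_{v,v}=0$ and $A_{v,w}=-|\{e\in E: v,w\in e\}|$ for $v\ne w$, normalized Laplacian $L=\mathrm{Id}-D^{-1}A$. Given a partition $V_1,\dots,V_k$ of $V$ and distinct $i,j$, the function $g_{ij}\colon V\to\mathbb R$ is defined by $g_{ij}(w)=1$ if $w\in V_i$, $g_{ij}(w)=-1$ if $w\in V_j$, and $g_{ij}(w)=0$ otherwise. *)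

(* Defs.v *)
From HB Require Import structures.
From mathcomp Require Import all_boot all_order all_algebra.
Set Implicit Arguments. Unset Strict Implicit. Unset Printing Implicit Defensive.
Import Order.TTheory GRing.Theory Num.Theory.
Local Open Scope ring_scope.

Section Hyper.
Variables (R : realFieldType) (V : finType) (E : {set {set V}}).

Definition hdeg (v : V) : nat := #|[set e in E | v \in e]|.

Definition hadj (v w : V) : R :=
  if v == w then 0 else - (#|[set e in E | (v \in e) && (w \in e)]|)%:R.

Definition hlap (v w : V) : R :=
  (v == w)%:R - ((hdeg v)%:R)^-1 * hadj v w.

Definition hlap_apply (f : V -> R) (v : V) : R := \sum_(w : V) hlap v w * f w.

Definition is_eigenfun_with (f : V -> R) (lam : R) : Prop :=
  (exists v, f v != 0) /\ forall v, hlap_apply f v = lam * f v.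

Definition is_eigenfun (f : V -> R) : Prop := exists lam, is_eigenfun_with f lam.

End Hyper.

(* A partition V_1..V_k of V given by a block map p : V -> 'I_k;
   V_i = block p i. *)
Definition block (V : finType) (k : nat) (p : V -> 'I_k) (i : 'I_k) : {set V} :=
  [set v | p v == i].

Definition gfun (R : realFieldType) (V : finType) (k : nat) (p : V -> 'I_k)
  (i j : 'I_k) (w : V) : R :=
  if w \in block p i then 1 else if w \in block p j then -1 else 0.

(* Main.v *)
Require Import Defs.
From HB Require Import structures.
From mathcomp Require Import all_boot all_order all_algebra.
From mathcomp Require Import ring lra.
Import Order.TTheory GRing.Theory Num.Theory.
Local Open Scope ring_scope.

Lemma cardI_sum (R : realFieldType) (T : finType) (A B : {set T}) :
  (#|A :&: B|)%:R = \sum_(x in A) ((x \in B)%:R : R).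
Proof.
rewrite -sum1_card natr_sum (eq_bigl (fun x => (x \in A) && (x \in B))).
  by rewrite big_mkcondr /=; apply: eq_bigr => x _; case: (x \in B).
by move=> x; rewrite inE.
Qed.

Section H.
Variables (R : realFieldType) (V : finType) (E : {set {set V}}).

Lemma hlap_applyE (f : V -> R) v : (0 < hdeg E v)%N ->
  hlap_apply E f v =
  (\sum_(e in [set e in E | v \in e]) \sum_(w in e) f w) / (hdeg E v)%:R.
Proof.
move=> d0.
have dn0 : (hdeg E v)%:R != 0 :> R by rewrite pnatr_eq0 -lt0n.
have hl : forall w, @hlap R V E v w = \sum_(e in [set e in E | v \in e]) (w \in (e : {set V}))%:R / (hdeg E v)%:R.
  move=> w; rewrite -mulr_suml (eq_bigr (fun e : {set V} => (e \in [set e0 : {set V} | w \in e0])%:R)); last by move=> e _; rewrite inE.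
  rewrite -cardI_sum /hlap /hadj.
  case: eqP => [<-|/eqP nvw].
    rewrite mulr0 subr0 /hdeg.
    have -> : [set e in E | v \in e] :&: [set e : {set V} | v \in e] = [set e in E | v \in e].
      by apply/setP => e; rewrite !inE -andbA andbb.
    by rewrite divff.
  rewrite sub0r mulrN opprK mulrC.
  have -> : [set e in E | v \in e] :&: [set e : {set V} | w \in e] =
     [set e in E | (v \in e) && (w \in e)].
    by apply/setP => e; rewrite !inE -andbA.
  by [].
rewrite /hlap_apply (eq_bigr (fun w => \sum_(e in [set e in E | v \in e]) ((w \in e)%:R * f w) / (hdeg E v)%:R)); last first.
  move=> w _; rewrite hl mulr_suml; apply: eq_bigr => e _; rewrite mulrAC //.
under eq_bigr do rewrite -mulr_suml. rewrite -mulr_suml exchange_big /=; congr (_ / _); apply: eq_bigr => e _.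
rewrite [in RHS]big_mkcond /=; apply: eq_bigr => w _.
by case: (w \in e); rewrite ?mul1r ?mul0r.
Qed.


Lemma sum_gfun k (p : V -> 'I_k) i j (e : {set V}) : i != j ->
  \sum_(w in e) gfun R p i j w =
  (#|e :&: block p i|)%:R - (#|e :&: block p j|)%:R.
Proof.
move=> ij; rewrite !cardI_sum -sumrB; apply: eq_bigr => w _.
rewrite /gfun /block !inE; case: (eqVneq (p w) i) => [->|pwi].
  by rewrite (negbTE ij) subr0.
case: (p w == j); rewrite /= ?mulr0n ?mulr1n ?sub0r ?subr0 ?oppr0 //.
Qed.

Lemma sum_block k (p : V -> 'I_k) (m : nat) v i :
  (forall e, e \in E -> forall i : 'I_k,
      #|e :&: block p i| = 0%N \/ #|e :&: block p i| = m) ->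
  (1 <= m)%N ->
  \sum_(e in [set e in E | v \in e]) ((#|e :&: block p i|)%:R : R) =
  m%:R * (#|[set e in E | (v \in e) && (e :&: block p i != set0)]|)%:R.
Proof.
move=> hm m1.
have -> : [set e in E | (v \in e) && (e :&: block p i != set0)] =
   [set e in E | v \in e] :&: [set e : {set V} | e :&: block p i != set0].
  by apply/setP => e; rewrite !inE andbA.
rewrite cardI_sum mulr_sumr; apply: eq_bigr => e; rewrite inE => /andP [eE _].
rewrite inE; case: (hm e eE i) => H.
  have -> : e :&: block p i = set0 by apply: cards0_eq.
  by rewrite eqxx mulr0 cards0.
have -> : e :&: block p i != set0 by rewrite -card_gt0 H.
by rewrite H mulr1.
Qed.

End H.

Theorem mainTheorem7 (R : realFieldType) (V : finType) (E : {set {set V}})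
  (c k m : nat) (p : V -> 'I_k) :
  (2 <= c)%N ->
  (forall e, e \in E -> #|e| = c) ->
  (forall v : V, (1 <= hdeg E v)%N) ->
  (2 <= k)%N ->
  (forall i : 'I_k, block p i != set0) ->
  (1 <= m)%N ->
  (forall e, e \in E -> forall i : 'I_k,
      #|e :&: block p i| = 0%N \/ #|e :&: block p i| = m) ->
  let cond :=
    forall (i : 'I_k) (v : V),
      (#|[set e in E | (v \in e) && (e :&: block p i != set0)]|)%:R =
      (if v \in block p i then (hdeg E v)%:R
       else ((c%:R / m%:R - 1) * (hdeg E v)%:R) / (k.-1)%:R :> R) in
  ((forall i j : 'I_k, i != j -> is_eigenfun E (@gfun R V k p i j))
     <-> cond)
  /\ (cond -> forall i j : 'I_k, i != j ->
        is_eigenfun_with E (@gfun R V k p i j)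
          (((m * k)%:R - c%:R) / (k.-1)%:R)).
Proof.
move=> c2 hc hd k2 hne m1 hm cond.
pose N i v := #|[set e in E | (v \in e) && (e :&: block p i != set0)]|.
have dn0 : forall v, (hdeg E v)%:R != 0 :> R.
  by move=> v; rewrite pnatr_eq0 -lt0n.
have mn0 : m%:R != 0 :> R by rewrite pnatr_eq0 -lt0n.
have k0 : (0 < k)%N by exact: leq_trans k2.
have k1 : (0 < k.-1)%N by rewrite -ltnS prednK.
have Kn0 : (k.-1)%:R != 0 :> R by rewrite pnatr_eq0 -lt0n.
have kK : k%:R = (k.-1)%:R + 1 :> R.
  by rewrite natr1 prednK.
have Lg : forall i j v, i != j -> hlap_apply E (gfun R p i j) v =
    m%:R * ((N i v)%:R - (N j v)%:R) / (hdeg E v)%:R.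
  move=> i j v ij; rewrite hlap_applyE //.
  under eq_bigr do rewrite sum_gfun //.
  by rewrite sumrB !(@sum_block R V E k p m v) // -mulrBr.
have Nl : forall v, N (p v) v = hdeg E v.
  move=> v; rewrite /N /hdeg; apply: eq_card => e; rewrite !inE.
  case: (e \in E) => //=; case ve: (v \in e) => //=.
  by apply/set0Pn; exists v; rewrite inE ve /block inE eqxx.
have Nsum : forall v, \sum_i (N i v)%:R * m%:R = c%:R * (hdeg E v)%:R :> R.
  move=> v.
  have := fun i => @sum_block R V E k p m v i hm m1.
  move=> sb; rewrite (eq_bigr (fun i => \sum_(e in [set e in E | v \in e]) ((#|e :&: block p i|)%:R : R))); last by move=> i _; rewrite sb mulrC.
  rewrite exchange_big /= (eq_bigr (fun _ => (c%:R : R))); last first.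
    move=> e; rewrite inE => /andP [eE _].
    rewrite (eq_bigr (fun i => \sum_(w in e) ((p w == i)%:R : R))); last first.
      move=> i _; rewrite cardI_sum; apply: eq_bigr => w _; by rewrite /block inE.
    rewrite exchange_big /= -(hc e eE) -sum1_card natr_sum; apply: eq_bigr => w _.
    rewrite (bigD1 (p w)) //= eqxx big1 ?addr0 // => i /negbTE.
    by rewrite eq_sym => ->.
  by rewrite sumr_const mulr_natr /hdeg; congr (_ *+ _); apply: eq_card => e; rewrite !inE.
have eig : cond -> forall i j : 'I_k, i != j ->
        is_eigenfun_with E (@gfun R V k p i j)
          (((m * k)%:R - c%:R) / (k.-1)%:R).
  move=> C i j ij; split.
    case/set0Pn: (hne i) => v; rewrite /block inE => /eqP pv.
    by exists v; rewrite /gfun /block inE pv eqxx oner_eq0.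
  move=> v; rewrite Lg // /gfun /block !inE.
  have Ci := C i v; have Cj := C j v; rewrite /block !inE in Ci Cj.
  rewrite -/(N i v) in Ci; rewrite -/(N j v) in Cj.
  rewrite natrM kK.
  case: (eqVneq (p v) i) => [pvi|pvi].
    rewrite pvi eqxx (negbTE ij) in Ci Cj *.
    rewrite Ci Cj; field; rewrite ?dn0 ?mn0 ?Kn0 //.
  case: (eqVneq (p v) j) => [pvj|pvj].
    rewrite pvj eqxx eq_sym (negbTE ij) in Ci Cj *.
    rewrite Ci Cj; field; rewrite ?dn0 ?mn0 ?Kn0 //.
  rewrite (negbTE pvi) in Ci; rewrite (negbTE pvj) in Cj.
  by rewrite Ci Cj subrr !mulr0 mul0r.
split; last exact: eig.
split; last first.
  by move=> C i j ij; exists (((m * k)%:R - c%:R) / (k.-1)%:R); apply: eig.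
move=> H i v; rewrite /block inE -/(N i v).
case: (eqVneq (p v) i) => [<-|pvi]; first by rewrite Nl.
have eqN : forall j, j != p v -> (N j v)%:R = (N i v)%:R :> R.
  move=> j jl; case: (eqVneq j i) => [->//|ji].
  have [lam [_ Hl]] := H i j (ltac:(by rewrite eq_sym)).
  move: (Hl v); rewrite Lg; last by rewrite eq_sym.
  rewrite /gfun /block !inE (negbTE pvi) eq_sym (negbTE jl) mulr0 => /eqP.
  rewrite mulf_eq0 invr_eq0 (negbTE (dn0 v)) orbF mulf_eq0 (negbTE mn0) /=.
  by rewrite subr_eq0 => /eqP ->.
have S := Nsum v.
rewrite (bigD1 (p v)) //= Nl in S.
rewrite (eq_bigr (fun _ => (N i v)%:R * m%:R)) in S; last by move=> j jl; rewrite eqN.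
rewrite sumr_const cardC1 card_ord -[X in _ + X = _]mulr_natr in S.
have -> : (N i v)%:R = (c%:R * (hdeg E v)%:R - (hdeg E v)%:R * m%:R) / (m%:R * (k.-1)%:R) :> R.
  rewrite -S; field; rewrite ?mn0 ?Kn0 //.
field; rewrite ?mn0 ?Kn0 //.
Qed.
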